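(* In the setting described in the context, for every $\theta\in\Theta$ and every POVM $M$, $F^M_\theta\le C_\Upsilon(\theta)$. Moreover, there exists a POVM $M$ (possibly depending on $\theta$) with $F^M_\theta=C_\Upsilon(\theta)$ if and only if $\langle w_j'(\theta)|w_k(\theta)\rangle=0$ for all $j,k$ with $p_j(\theta)>0$ and $p_k(\theta)>0$.
   Context: Let $\Theta\subseteq\mathbb{R}$ be an open interval and $D\ge1$. For $\theta\in\Theta$ let $\Phi_\theta$ be a quantum channel on $D\times D$ complex matrices and $\rho_0=|\psi_0\rangle\langle\psi_0|$ a fixed pure input state. Canonical Kraus operators are $D\times D$ matrices $\Upsilon_1(\theta),\dots,\Upsilon_D(\theta)$, differentiable in $\theta$, with $\sum_k\Upsilon_k^\dagger\Upsilon_k=\mathbb{I}$, $\Phi_\theta(\rho)=\sum_k\Upsilon_k\rho\Upsilon_k^\dagger$, and $\mathrm{tr}\{\Upsilon_k\rho_0\Upsilon_j^\dagger\}=\delta_{jk}p_k(\theta)$. Write $\Upsilon_k(\theta)|\psi_0\rangle=\sqrt{p_k(\theta)}|w_k(\theta)\rangle$ with $\{|w_k(\theta)\rangle\}$ an orthonormal basis of $\mathbb{C}^D$ differentiable in $\theta$; the output is $\rho_\theta=\sum_kp_k|w_k\rangle\langle w_k|$. Each $p_k$ is assumed either identically zero or strictly positive on $\Theta$. Primes denote $d/d\theta$. $C_\Upsilon(\theta)=4\sum_k\mathrm{tr}\{\Upsilon_k'\rho_0\Upsilon_k'^\dagger\}$. A POVM is a finite family $M=\{M_m\}$ of positive semidefinite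 $D\times D$ matrices with $\sum_mM_m=\mathbb{I}$; with $p(m;\theta)=\mathrm{tr}\{\rho_\theta M_m\}$, its Fisher information is $F^M_\theta=\sum_{m:\,p(m;\theta)>0}\frac{1}{p(m;\theta)}\bigl(\frac{dp(m;\theta)}{d\theta}\bigr)^2$. *)

(* Defs.v *)
From HB Require Import structures.
From mathcomp Require Import all_boot all_order all_algebra.
From mathcomp Require Import all_classical all_reals all_analysis.
From mathcomp Require Import complex.
Set Implicit Arguments. Unset Strict Implicit. Unset Printing Implicit Defensive.
Import Order.TTheory GRing.Theory Num.Theory.
Local Open Scope ring_scope.
Local Open Scope complex_scope.

Section Defs.
Variable R : realType.
Local Notation C := R[i].

Definition adj m n (A : 'M[C]_(m, n)) : 'M[C]_(n, m) := (map_mx (@conjc R) A)^T.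

Definition cderiv (f : R -> C) (x : R) (d : C) : Prop :=
  is_derive x 1 (fun t => complex.Re (f t)) (complex.Re d) /\ is_derive x 1 (fun t => complex.Im (f t)) (complex.Im d).

Definition mxderiv m n (f : R -> 'M[C]_(m, n)) (x : R) (F : 'M[C]_(m, n)) : Prop :=
  forall i j, cderiv (fun t => f t i j) x (F i j).

(* positive semidefinite complex matrix: v^dagger A v >= 0 for all v
   (in R[i], 0 <= z means z is real and nonnegative) *)
Definition psd n (A : 'M[C]_n) : Prop :=
  forall v : 'cV[C]_n, 0 <= (adj v *m A *m v) 0 0.

Definition POVM n N (M : 'I_N -> 'M[C]_n) : Prop :=
  (forall m, psd (M m)) /\ \sum_(m < N) M m = 1%:M.

(* outcome probability p(m; theta) = tr(rho_theta M_m) (real part; it is real) *)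
Definition outprob n N (rho : R -> 'M[C]_n) (M : 'I_N -> 'M[C]_n) (m : 'I_N) (th : R) : R :=
  complex.Re (\tr (rho th *m M m)).

Definition fisher n N (rho : R -> 'M[C]_n) (M : 'I_N -> 'M[C]_n) (th : R) : R :=
  \sum_(m < N | 0 < outprob rho M m th)
     (derive1 (outprob rho M m) th) ^+ 2 / outprob rho M m th.

Definition outstate n (Ups : 'I_n -> R -> 'M[C]_n) (rho0 : 'M[C]_n) (th : R) : 'M[C]_n :=
  \sum_(k < n) (Ups k th *m rho0 *m adj (Ups k th)).

Definition CUps n (Ups' : 'I_n -> R -> 'M[C]_n) (rho0 : 'M[C]_n) (th : R) : R :=
  4 * complex.Re (\sum_(k < n) \tr (Ups' k th *m rho0 *m adj (Ups' k th))).

End Defs.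

(* Main.v *)
Require Import Defs.
From HB Require Import structures.
From mathcomp Require Import all_boot all_order all_algebra.
From mathcomp Require Import all_classical all_reals all_analysis.
From mathcomp Require Import complex ring lra.
Import Order.TTheory GRing.Theory Num.Theory.
Import numFieldNormedType.Exports.
Local Open Scope ring_scope.
Local Open Scope complex_scope.
Local Open Scope classical_set_scope.

Set Implicit Arguments. Unset Strict Implicit. Unset Printing Implicit Defensive.

Lemma conjCE (R : realType) (x : R[i]) : (x^*)%R = conjc x.
Proof.
case: x => a b.
have -> : a +i* b = a%:C + 'i%R * b%:C.
  by rewrite -complexiE; simpc.
rewrite conjC_rect ?complex_real //.
by rewrite -complexiE; simpc.
Qed.

Section H1.
Variable R : realType.
Local Notation C := R[i].

Lemma adjD m n (A B : 'M[C]_(m, n)) : adj (A + B) = adj A + adj B.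
Proof. by apply/matrixP => i j; rewrite !mxE rmorphD. Qed.

Lemma adjN m n (A : 'M[C]_(m, n)) : adj (- A) = - adj A.
Proof. by apply/matrixP => i j; rewrite !mxE rmorphN. Qed.

Lemma adj0 m n : adj (0 : 'M[C]_(m, n)) = 0.
Proof. by apply/matrixP => i j; rewrite !mxE rmorph0. Qed.

Lemma adjZ m n (c : C) (A : 'M[C]_(m, n)) : adj (c *: A) = conjc c *: adj A.
Proof. by apply/matrixP => i j; rewrite !mxE rmorphM. Qed.

Lemma adjK m n (A : 'M[C]_(m, n)) : adj (adj A) = A.
Proof. by apply/matrixP => i j; rewrite !mxE conjcK. Qed.

Lemma adjM m n p (A : 'M[C]_(m, n)) (B : 'M[C]_(n, p)) :
  adj (A *m B) = adj B *m adj A.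
Proof.
apply/matrixP => i j; rewrite !mxE rmorph_sum /=; apply: eq_bigr => k _.
by rewrite !mxE rmorphM mulrC.
Qed.

Lemma adj_sum m n (I : finType) (F : I -> 'M[C]_(m, n)) :
  adj (\sum_i F i) = \sum_i adj (F i).
Proof.
apply/matrixP => i j; rewrite !mxE summxE rmorph_sum /= summxE.
by apply: eq_bigr => k _; rewrite !mxE.
Qed.

Lemma adj1 n : adj (1%:M : 'M[C]_n) = 1%:M.
Proof. by rewrite /adj map_mx1 trmx1. Qed.

Lemma adj_real (r : R) : conjc (r%:C) = r%:C.
Proof. exact: conjc_real. Qed.

Definition form n (M : 'M[C]_n) (x y : 'cV[C]_n) : C := (adj x *m M *m y) 0 0.

Lemma formDl n (M : 'M[C]_n) x1 x2 y : form M (x1 + x2) y = form M x1 y + form M x2 y.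
Proof. by rewrite /form adjD !mulmxDl mxE. Qed.
Lemma formDr n (M : 'M[C]_n) x y1 y2 : form M x (y1 + y2) = form M x y1 + form M x y2.
Proof. by rewrite /form mulmxDr mxE. Qed.
Lemma formZl n (M : 'M[C]_n) c x y : form M (c *: x) y = conjc c * form M x y.
Proof. by rewrite /form adjZ -!scalemxAl mxE. Qed.
Lemma formZr n (M : 'M[C]_n) c x y : form M x (c *: y) = c * form M x y.
Proof. by rewrite /form -!scalemxAr mxE. Qed.
Lemma formNl n (M : 'M[C]_n) x y : form M (- x) y = - form M x y.
Proof. by rewrite /form adjN !mulNmx mxE. Qed.
Lemma formNr n (M : 'M[C]_n) x y : form M x (- y) = - form M x y.
Proof. by rewrite /form mulmxN mxE. Qed.
Lemma formBl n (M : 'M[C]_n) x1 x2 y : form M (x1 - x2) y = form M x1 y - form M x2 y.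
Proof. by rewrite formDl formNl. Qed.
Lemma formBr n (M : 'M[C]_n) x y1 y2 : form M x (y1 - y2) = form M x y1 - form M x y2.
Proof. by rewrite formDr formNr. Qed.
Lemma form0l n (M : 'M[C]_n) y : form M 0 y = 0.
Proof. by rewrite /form adj0 !mul0mx mxE. Qed.
Lemma form0r n (M : 'M[C]_n) x : form M x 0 = 0.
Proof. by rewrite /form mulmx0 mxE. Qed.
Lemma form_sumM n (I : finType) (F : I -> 'M[C]_n) x y :
  form (\sum_i F i) x y = \sum_i form (F i) x y.
Proof. by rewrite /form mulmx_sumr mulmx_suml summxE. Qed.

Lemma cReD (a b : C) : complex.Re (a + b) = complex.Re a + complex.Re b.
Proof. by case: a; case: b. Qed.
Lemma cImD (a b : C) : complex.Im (a + b) = complex.Im a + complex.Im b.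
Proof. by case: a; case: b. Qed.
Lemma cReN (a : C) : complex.Re (- a) = - complex.Re a.
Proof. by case: a. Qed.
Lemma cImN (a : C) : complex.Im (- a) = - complex.Im a.
Proof. by case: a. Qed.
Lemma cReM (a b : C) : complex.Re (a * b) = complex.Re a * complex.Re b - complex.Im a * complex.Im b.
Proof. by case: a; case: b. Qed.
Lemma cImM (a b : C) : complex.Im (a * b) = complex.Re a * complex.Im b + complex.Im a * complex.Re b.
Proof. by case: a => a1 a2; case: b => b1 b2 /=; rewrite addrC. Qed.
Lemma cRe_sum (I : finType) (F : I -> C) : complex.Re (\sum_i F i) = \sum_i complex.Re (F i).
Proof. by apply: (big_morph _ cReD). Qed.
Lemma cIm_sum (I : finType) (F : I -> C) : complex.Im (\sum_i F i) = \sum_i complex.Im (F i).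
Proof. by apply: (big_morph _ cImD). Qed.
Lemma cRe_conj (a : C) : complex.Re (conjc a) = complex.Re a. Proof. by case: a. Qed.
Lemma cIm_conj (a : C) : complex.Im (conjc a) = - complex.Im a. Proof. by case: a. Qed.
Lemma Re_real (r : R) : complex.Re (r%:C) = r. Proof. by []. Qed.
Lemma Im_real (r : R) : complex.Im (r%:C) = 0. Proof. by []. Qed.
Lemma complex_ext (a b : C) : complex.Re a = complex.Re b -> complex.Im a = complex.Im b -> a = b.
Proof. by case: a; case: b => ? ? ? ? /= -> ->. Qed.

Lemma conjcM (x y : C) : conjc (x * y) = conjc x * conjc y.
Proof. by case: x => a1 a2; case: y => b1 b2; apply: complex_ext => /=; ring. Qed.

End H1.
Local Open Scope classical_set_scope.
Set Implicit Arguments. Unset Strict Implicit. Unset Printing Implicit Defensive.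

Section H2.
Variable R : realType.
Local Notation C := R[i].

Lemma ge0C (z : C) : 0 <= z -> complex.Im z = 0 /\ 0 <= complex.Re z.
Proof. by rewrite lecE => /andP[/eqP -> ->]. Qed.

Lemma psd_form n (M : 'M[C]_n) v : psd M -> complex.Im (form M v v) = 0 /\ 0 <= complex.Re (form M v v).
Proof. by move=> /(_ v) /ge0C. Qed.

Lemma psd_herm n (M : 'M[C]_n) x y : psd M -> form M x y = conjc (form M y x).
Proof.
move=> Mp.
have [h1 _] := psd_form (x + y) Mp.
have [h2 _] := psd_form (x + 'i *: y) Mp.
have [hx _] := psd_form x Mp.
have [hy _] := psd_form y Mp.
move: h1 h2; rewrite !(formDl, formDr, formZl, formZr) mulrA.
move: hx hy; set a := form M x x; set b := form M y y; set u := form M x y; set v := form M y x.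
case: a => a1 a2; case: b => b1 b2; case: u => u1 u2; case: v => v1 v2 /= -> ->.
move=> h1 h2; apply: complex_ext => /=; lra.
Qed.

End H2.

Section H2b.
Variable R : realType.
Local Notation C := R[i].

Lemma quad_disc (P S Q : R) : 0 <= Q -> (forall t, 0 <= P + t * S + t ^+ 2 * Q) -> S ^+ 2 <= 4 * P * Q.
Proof.
move=> Q0 H.
have [Qp|Qz] := ltrP 0 Q.
  have := H (- S / (2 * Q)).
  have hQ : Q != 0 by rewrite gt_eqF.
  suff -> : P + - S / (2 * Q) * S + (- S / (2 * Q)) ^+ 2 * Q = (4 * P * Q - S ^+ 2) / (4 * Q).
    by rewrite pmulr_lge0 ?invr_gt0 ?mulr_gt0 // subr_ge0.
  by field; rewrite hQ.
have Qe : Q = 0 by apply/le_anti; rewrite Q0 Qz.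
subst Q; rewrite mulr0.
have [->|Sn] := eqVneq S 0; first by rewrite expr0n.
have := H (- (`|P| + 1) / S).
suff -> : P + - (`|P| + 1) / S * S + (- (`|P| + 1) / S) ^+ 2 * 0 = P - `|P| - 1.
  move=> h; exfalso; move: h; apply/negP; rewrite -ltNge.
  have := ler_norm P; lra.
by field.
Qed.

Lemma form_CS n (M : 'M[C]_n) (I : finType) (a b : I -> 'cV[C]_n) : psd M ->
  let P := complex.Re (\sum_k form M (a k) (a k)) in
  let S := complex.Re (\sum_k (form M (a k) (b k) + form M (b k) (a k))) in
  let Q := complex.Re (\sum_k form M (b k) (b k)) in
  [/\ 0 <= P, 0 <= Q & S ^+ 2 <= 4 * P * Q].
Proof.
move=> Mp P S Q.
have hP : 0 <= P by rewrite /P cRe_sum; apply: sumr_ge0 => k _; case: (psd_form (a k) Mp).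
have hQ : 0 <= Q by rewrite /Q cRe_sum; apply: sumr_ge0 => k _; case: (psd_form (b k) Mp).
split => //; apply: quad_disc => // t.
have : 0 <= complex.Re (\sum_k form M (a k + t%:C *: b k) (a k + t%:C *: b k)).
  by rewrite cRe_sum; apply: sumr_ge0 => k _; case: (psd_form (a k + t%:C *: b k) Mp).
suff -> : complex.Re (\sum_k form M (a k + t%:C *: b k) (a k + t%:C *: b k)) = P + t * S + t ^+ 2 * Q by [].
rewrite /P /S /Q !cRe_sum mulr_sumr mulr_sumr -!big_split /=; apply: eq_bigr => k _.
rewrite !(formDl, formDr, formZl, formZr) adj_real.
case: (form M (a k) (a k)) => ? ?; case: (form M (a k) (b k)) => ? ?.
case: (form M (b k) (a k)) => ? ?; case: (form M (b k) (b k)) => ? ? /=.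
ring.
Qed.

Lemma form_vanish n (M : 'M[C]_n) z : psd M -> complex.Re (form M z z) = 0 -> forall y, form M y z = 0.
Proof.
move=> Mp hz y.
have h1 := form_CS (fun _ : 'I_1 => z) (fun _ => y) Mp.
have h2 := form_CS (fun _ : 'I_1 => z) (fun _ => 'i *: y) Mp.
move: h1 h2 => /= [_ _ h1] [_ _ h2]; move: h1 h2; rewrite !big_ord1 hz !mulr0 !mul0r.
rewrite !(formZl, formZr) (psd_herm z y Mp).
case: (form M y z) => u1 u2 /= h1 h2.
have e1 : u1 + u1 = 0.
  by apply/eqP; rewrite -sqrf_eq0 eq_le sqr_ge0 andbT.
have e2 : - u2 - u2 = 0.
  apply/eqP; rewrite -sqrf_eq0 eq_le sqr_ge0 andbT.
  move: h2 => /=; apply: le_trans; rewrite le_eqVlt; apply/orP; left; apply/eqP; ring.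
apply: complex_ext => /=; lra.
Qed.

End H2b.
Set Implicit Arguments. Unset Strict Implicit. Unset Printing Implicit Defensive.

Section H3.
Variable R : realType.

Lemma fisher_sum N (p s Q : 'I_N -> R) : (forall m, 0 <= p m) -> (forall m, 0 <= Q m) ->
  (forall m, s m ^+ 2 <= 4 * p m * Q m) ->
  (\sum_(m < N | 0 < p m) s m ^+ 2 / p m <= \sum_m 4 * Q m) /\
  (\sum_(m < N | 0 < p m) s m ^+ 2 / p m = \sum_m 4 * Q m <->
     forall m, s m ^+ 2 = 4 * p m * Q m /\ (p m = 0 -> Q m = 0)).
Proof.
move=> p0 Q0 hs.
pose g m := if 0 < p m then 4 * Q m - s m ^+ 2 / p m else 4 * Q m.
have g0 m : 0 <= g m.
  rewrite /g; case: ifP => pp; last by rewrite mulr_ge0.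
  rewrite subr_ge0 ler_pdivrMr //; move: (hs m); lra.
have E : \sum_m 4 * Q m - \sum_(m < N | 0 < p m) s m ^+ 2 / p m = \sum_m g m.
  rewrite (bigID (fun m => 0 < p m)) /= [in RHS](bigID (fun m => 0 < p m)) /=.
  rewrite /g; under [in RHS]eq_bigr => m hm do rewrite hm.
  under [X in _ = _ + X]eq_bigr => m hm do rewrite (negPf hm).
  by rewrite sumrB addrAC.
have hg : 0 <= \sum_m g m by apply: sumr_ge0.
split; first by move: hg; rewrite -E subr_ge0.
split.
- move=> hF; have : \sum_m g m = 0 by rewrite -E hF subrr.
  move/psumr_eq0P => /(_ (fun m _ => g0 m)) hz m.
  have := hz m isT; rewrite /g; case: ifP => pp.
    move=> /eqP; rewrite subr_eq0 => /eqP e; split; last by move=> pz; move: pp; rewrite pz ltxx.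
    move/(congr1 (fun x => x * p m)): e; rewrite divfK ?gt_eqF // => <-; ring.
  move=> e; have hQ : Q m = 0 by lra.
  split => //.
  have := hs m; rewrite hQ mulr0 => h.
  have : s m ^+ 2 == 0 by rewrite eq_le h sqr_ge0.
  by move/eqP ->.
- move=> H; apply/eqP; rewrite eq_sym -subr_eq0 E; apply/eqP; apply: big1 => m _.
  rewrite /g; case: ifP => pp.
    by rewrite (proj1 (H m)) mulrAC mulfK ?gt_eqF // subrr.
  have pz : p m = 0 by apply/le_anti; rewrite p0 andbT leNgt pp.
  by rewrite (proj2 (H m) pz) mulr0.
Qed.

End H3.
Local Open Scope classical_set_scope.
Set Implicit Arguments. Unset Strict Implicit. Unset Printing Implicit Defensive.

Section H4.
Variable R : realType.
Local Notation C := R[i].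

Lemma scaleRE (a b : R) : a *: b = a * b. Proof. by []. Qed.

Lemma cderiv_uniq (f : R -> C) x d1 d2 : cderiv f x d1 -> cderiv f x d2 -> d1 = d2.
Proof.
move=> [r1 i1] [r2 i2]; apply: complex_ext.
  by rewrite -(@derive_val _ _ _ _ _ _ _ r1) -(@derive_val _ _ _ _ _ _ _ r2).
by rewrite -(@derive_val _ _ _ _ _ _ _ i1) -(@derive_val _ _ _ _ _ _ _ i2).
Qed.

Lemma cderiv_near (f g : R -> C) x d : (\near x, f x = g x) -> cderiv f x d -> cderiv g x d.
Proof.
move=> hn [h1 h2]; split.
  by apply: (near_eq_is_derive _ h1); near=> t; rewrite (near hn t).
by apply: (near_eq_is_derive _ h2); near=> t; rewrite (near hn t).
Unshelve. all: by end_near.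
Qed.

Lemma cderiv_cst (c : C) x : cderiv (fun _ => c) x 0.
Proof. by split; apply: is_derive_cst. Qed.

Lemma cderivD (f g : R -> C) x df dg : cderiv f x df -> cderiv g x dg ->
  cderiv (fun t => f t + g t) x (df + dg).
Proof.
move=> [f1 f2] [g1 g2]; split.
  have -> : (fun t => complex.Re (f t + g t)) = (fun t => complex.Re (f t)) + (fun t => complex.Re (g t)).
    by apply/funext => t; rewrite cReD.
  by rewrite cReD; apply: is_deriveD.
have -> : (fun t => complex.Im (f t + g t)) = (fun t => complex.Im (f t)) + (fun t => complex.Im (g t)).
  by apply/funext => t; rewrite cImD.
by rewrite cImD; apply: is_deriveD.
Qed.

Lemma cderivN (f : R -> C) x df : cderiv f x df -> cderiv (fun t => - f t) x (- df).
Proof.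
move=> [f1 f2]; split.
  have -> : (fun t => complex.Re (- f t)) = - (fun t => complex.Re (f t)).
    by apply/funext => t; rewrite cReN.
  by rewrite cReN; apply: is_deriveN.
have -> : (fun t => complex.Im (- f t)) = - (fun t => complex.Im (f t)).
  by apply/funext => t; rewrite cImN.
by rewrite cImN; apply: is_deriveN.
Qed.

Lemma cderivM (f g : R -> C) x df dg : cderiv f x df -> cderiv g x dg ->
  cderiv (fun t => f t * g t) x (df * g x + f x * dg).
Proof.
move=> [f1 f2] [g1 g2]; split.
  have h := (is_deriveB (is_deriveM f1 g1) (is_deriveM f2 g2)).
  have -> : (fun t => complex.Re (f t * g t)) =
     (fun t => complex.Re (f t)) * (fun t => complex.Re (g t)) - (fun t => complex.Im (f t)) * (fun t => complex.Im (g t)).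
    by apply/funext => t; rewrite cReM.
  eapply is_derive_eq; [exact h|].
  rewrite cReD !cReM /= !scaleRE; ring.
have -> : (fun t => complex.Im (f t * g t)) =
   (fun t => complex.Re (f t)) * (fun t => complex.Im (g t)) + (fun t => complex.Im (f t)) * (fun t => complex.Re (g t)).
  by apply/funext => t; rewrite cImM.
have h := (is_deriveD (is_deriveM f1 g2) (is_deriveM f2 g1)).
eapply is_derive_eq; [exact h|].
rewrite cImD !cImM /= !scaleRE; ring.
Qed.

Lemma cderiv_conj (f : R -> C) x df : cderiv f x df -> cderiv (fun t => conjc (f t)) x (conjc df).
Proof.
move=> [f1 f2]; split.
  have -> : (fun t => complex.Re (conjc (f t))) = (fun t => complex.Re (f t)).
    by apply/funext => t; rewrite cRe_conj.
  by rewrite cRe_conj.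
have -> : (fun t => complex.Im (conjc (f t))) = - (fun t => complex.Im (f t)).
  by apply/funext => t; rewrite cIm_conj.
by rewrite cIm_conj; apply: is_deriveN.
Qed.

Lemma cderiv_sum n (f : 'I_n -> R -> C) x df : (forall i, cderiv (f i) x (df i)) ->
  cderiv (fun t => \sum_i f i t) x (\sum_i df i).
Proof.
move=> h; split.
  have -> : (fun t => complex.Re (\sum_i f i t)) = \sum_i (fun t => complex.Re (f i t)).
    by rewrite fct_sumE; apply/funext => t; rewrite cRe_sum.
  by rewrite cRe_sum; apply: is_derive_sum => i; case: (h i).
have -> : (fun t => complex.Im (\sum_i f i t)) = \sum_i (fun t => complex.Im (f i t)).
  by rewrite fct_sumE; apply/funext => t; rewrite cIm_sum.
by rewrite cIm_sum; apply: is_derive_sum => i; case: (h i).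
Qed.

Lemma cderiv_real (r : R -> R) (x dr : R) : is_derive x (1:R) r dr -> cderiv (fun t => (r t)%:C) x dr%:C.
Proof. by move=> h; split => //=; apply: is_derive_cst. Qed.

End H4.
Local Open Scope classical_set_scope.
Set Implicit Arguments. Unset Strict Implicit. Unset Printing Implicit Defensive.

Section H5.
Variable R : realType.
Local Notation C := R[i].

Lemma cderiv_ext (f g : R -> C) x d : (forall t, f t = g t) -> cderiv f x d -> cderiv g x d.
Proof. by move=> e; have -> : g = f by apply/funext => t; rewrite e. Qed.

Lemma cderiv_eqd (f : R -> C) x d d' : d = d' -> cderiv f x d -> cderiv f x d'.
Proof. by move=> ->. Qed.

Lemma mxderiv_uniq m n (f : R -> 'M[C]_(m, n)) x F1 F2 : mxderiv f x F1 -> mxderiv f x F2 -> F1 = F2.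
Proof. by move=> h1 h2; apply/matrixP => i j; apply: cderiv_uniq (h1 i j) (h2 i j). Qed.

Lemma mxderiv_near m n (f g : R -> 'M[C]_(m, n)) x F : (\near x, f x = g x) -> mxderiv f x F -> mxderiv g x F.
Proof.
move=> hn h i j; apply: cderiv_near (h i j).
by near=> t; rewrite (near hn t).
Unshelve. all: by end_near.
Qed.

Lemma mxderiv_cst m n (A : 'M[C]_(m, n)) x : mxderiv (fun _ => A) x 0.
Proof. by move=> i j; rewrite mxE; apply: cderiv_cst. Qed.

Lemma mxderivD m n (f g : R -> 'M[C]_(m, n)) x F G : mxderiv f x F -> mxderiv g x G ->
  mxderiv (fun t => f t + g t) x (F + G).
Proof.
move=> hf hg i j; rewrite mxE; apply: cderiv_ext (cderivD (hf i j) (hg i j)).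
by move=> t; rewrite mxE.
Qed.

Lemma mxderiv_sum k m n (f : 'I_k -> R -> 'M[C]_(m, n)) x F : (forall l, mxderiv (f l) x (F l)) ->
  mxderiv (fun t => \sum_l f l t) x (\sum_l F l).
Proof.
move=> h i j; rewrite summxE; apply: cderiv_ext (cderiv_sum (fun l => h l i j)).
by move=> t; rewrite summxE.
Qed.

Lemma mxderiv_mul m n p (f : R -> 'M[C]_(m, n)) (g : R -> 'M[C]_(n, p)) x F G :
  mxderiv f x F -> mxderiv g x G -> mxderiv (fun t => f t *m g t) x (F *m g x + f x *m G).
Proof.
move=> hf hg i j.
have := cderiv_sum (fun l => cderivM (hf i l) (hg l j)).
move=> /(cderiv_ext (g := fun t => (f t *m g t) i j)) h.
apply: cderiv_eqd (h _); last by move=> t; rewrite mxE.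
by rewrite !mxE -big_split.
Qed.

Lemma mxderiv_adj m n (f : R -> 'M[C]_(m, n)) x F : mxderiv f x F -> mxderiv (fun t => adj (f t)) x (adj F).
Proof.
move=> hf i j; rewrite !mxE; apply: cderiv_ext (cderiv_conj (hf j i)).
by move=> t; rewrite !mxE.
Qed.

Lemma mxderiv_scale m n (c : R -> C) (f : R -> 'M[C]_(m, n)) x dc F :
  cderiv c x dc -> mxderiv f x F -> mxderiv (fun t => c t *: f t) x (dc *: f x + c x *: F).
Proof.
move=> hc hf i j; rewrite !mxE; apply: cderiv_ext (cderivM hc (hf i j)).
by move=> t; rewrite mxE.
Qed.

Lemma cderiv_tr n (f : R -> 'M[C]_n) x F : mxderiv f x F -> cderiv (fun t => \tr (f t)) x (\tr F).
Proof. by move=> hf; apply: cderiv_sum => i; apply: hf. Qed.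

Lemma mxderiv_mulml m n p (A : 'M[C]_(m, n)) (g : R -> 'M[C]_(n, p)) x G :
  mxderiv g x G -> mxderiv (fun t => A *m g t) x (A *m G).
Proof.
move=> hg; have := mxderiv_mul (mxderiv_cst A x) hg.
by rewrite mul0mx add0r.
Qed.

Lemma mxderiv_mulmr m n p (f : R -> 'M[C]_(m, n)) (B : 'M[C]_(n, p)) x F :
  mxderiv f x F -> mxderiv (fun t => f t *m B) x (F *m B).
Proof.
move=> hf; have := mxderiv_mul hf (mxderiv_cst B x).
by rewrite mulmx0 addr0.
Qed.

End H5.
Local Open Scope classical_set_scope.
Set Implicit Arguments. Unset Strict Implicit. Unset Printing Implicit Defensive.

Section H6.
Variable R : realType.
Local Notation C := R[i].

Lemma tr_outer n (x y : 'cV[C]_n) (M : 'M[C]_n) : \tr (x *m adj y *m M) = form M y x.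
Proof. by rewrite -mulmxA mxtrace_mulC trace_mx11. Qed.

Lemma tr_sum n (I : finType) (F : I -> 'M[C]_n) : \tr (\sum_i F i) = \sum_i \tr (F i).
Proof. exact: raddf_sum. Qed.

Variables (D : nat) (psi0 : 'cV[C]_D) (Ups Ups' : 'I_D -> R -> 'M[C]_D) (th : R).
Hypothesis hU : forall k, mxderiv (Ups k) th (Ups' k th).

Let rho0 := psi0 *m adj psi0.
Let a k t := Ups k t *m psi0.
Let b k := Ups' k th *m psi0.

Lemma outstateE t : outstate Ups rho0 t = \sum_k a k t *m adj (a k t).
Proof. by apply: eq_bigr => k _; rewrite /a adjM !mulmxA. Qed.

Lemma outprobE N (M : 'I_N -> 'M[C]_D) m t :
  outprob (outstate Ups rho0) M m t = complex.Re (\sum_k form (M m) (a k t) (a k t)).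
Proof.
by rewrite /outprob outstateE mulmx_suml tr_sum; congr complex.Re; apply: eq_bigr => k _; rewrite tr_outer.
Qed.

Lemma outprob_deriv N (M : 'I_N -> 'M[C]_D) m :
  is_derive th (1:R) (outprob (outstate Ups rho0) M m)
    (complex.Re (\sum_k (form (M m) (a k th) (b k) + form (M m) (b k) (a k th)))).
Proof.
have ha k : mxderiv (a k) th (b k) by apply: mxderiv_mulmr.
have h1 : mxderiv (fun t => outstate Ups rho0 t *m M m) th
   ((\sum_k (b k *m adj (a k th) + a k th *m adj (b k))) *m M m).
  apply: mxderiv_mulmr.
  have := mxderiv_sum (fun k => mxderiv_mul (ha k) (mxderiv_adj (ha k))).
  by apply: mxderiv_near; near=> t; rewrite outstateE.
have [h2 _] := cderiv_tr h1.
suff <- : complex.Re (\tr ((\sum_k (b k *m adj (a k th) + a k th *m adj (b k))) *m M m)) =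
    complex.Re (\sum_k (form (M m) (a k th) (b k) + form (M m) (b k) (a k th))) by exact: h2.
rewrite mulmx_suml tr_sum; congr complex.Re; apply: eq_bigr => k _.
by rewrite mulmxDl mxtraceD !tr_outer.
Unshelve. all: by end_near.
Qed.

Definition pM N (M : 'I_N -> 'M[C]_D) m := outprob (outstate Ups rho0) M m th.
Definition sM N (M : 'I_N -> 'M[C]_D) m := derive1 (outprob (outstate Ups rho0) M m) th.
Definition QM N (M : 'I_N -> 'M[C]_D) m := complex.Re (\sum_k form (M m) (b k) (b k)).

Lemma sME N (M : 'I_N -> 'M[C]_D) m :
  sM M m = complex.Re (\sum_k (form (M m) (a k th) (b k) + form (M m) (b k) (a k th))).
Proof. by rewrite /sM derive1E (@derive_val _ _ _ _ _ _ _ (outprob_deriv M m)). Qed.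

Lemma CUpsE N (M : 'I_N -> 'M[C]_D) : POVM M -> CUps Ups' rho0 th = \sum_m 4 * QM M m.
Proof.
move=> [_ hsum].
rewrite /CUps /QM.
have -> : \sum_k \tr (Ups' k th *m rho0 *m adj (Ups' k th)) = \sum_k \sum_m form (M m) (b k) (b k).
  apply: eq_bigr => k _; rewrite -form_sumM hsum -tr_outer mulmx1 /b adjM !mulmxA //.
rewrite exchange_big /= cRe_sum mulr_sumr.
by apply: eq_bigr => m _; rewrite cRe_sum.
Qed.

Lemma fisher_char N (M : 'I_N -> 'M[C]_D) : POVM M ->
  fisher (outstate Ups rho0) M th <= CUps Ups' rho0 th /\
  (fisher (outstate Ups rho0) M th = CUps Ups' rho0 th <->
     forall m, sM M m ^+ 2 = 4 * pM M m * QM M m /\ (pM M m = 0 -> QM M m = 0)).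
Proof.
move=> hM; rewrite (CUpsE hM).
have hCS m := form_CS (fun k => a k th) b (proj1 hM m).
have := @fisher_sum R N (pM M) (sM M) (QM M).
have -> : fisher (outstate Ups rho0) M th = \sum_(m < N | 0 < pM M m) sM M m ^+ 2 / pM M m by [].
apply.
- by move=> m; rewrite /pM outprobE; case: (hCS m).
- by move=> m; case: (hCS m).
- by move=> m; rewrite sME /pM outprobE; case: (hCS m).
Qed.

End H6.
Local Open Scope classical_set_scope.
Set Implicit Arguments. Unset Strict Implicit. Unset Printing Implicit Defensive.

Section H7.
Variable R : realType.
Local Notation C := R[i].


Lemma sum_ge0_eq0 (I : finType) (F : I -> R) : (forall i, 0 <= F i) -> \sum_i F i = 0 -> forall i, F i = 0.
Proof. by move=> h0 hs i; move/psumr_eq0P: hs => /(_ (fun i _ => h0 i)) /(_ i isT). Qed.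

Lemma step1 n D (M : 'M[C]_n) (a b : 'I_D -> 'cV[C]_n) : psd M ->
  let P := complex.Re (\sum_k form M (a k) (a k)) in
  let S := complex.Re (\sum_k (form M (a k) (b k) + form M (b k) (a k))) in
  let Q := complex.Re (\sum_k form M (b k) (b k)) in
  S ^+ 2 = 4 * P * Q -> (P = 0 -> Q = 0) ->
  exists lam : R, forall y k, form M y (b k) = lam%:C * form M y (a k).
Proof.
move=> Mp P S Q hSQ hPQ.
have [hP0 hQ0 _] := form_CS a b Mp.
have ge0 (z : 'cV[C]_n) : 0 <= complex.Re (form M z z) by case: (psd_form z Mp).
have [Pp|Pz] := ltrP 0 P; last first.
  have Pe : P = 0 by apply/le_anti; rewrite Pz hP0.
  have Qe := hPQ Pe.
  exists 0 => y k; rewrite mul0r.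
  have hb := sum_ge0_eq0 (fun k => ge0 (b k)) (etrans (esym (cRe_sum _)) Qe).
  exact: form_vanish Mp (hb k) y.
pose lam := S / (2 * P).
exists lam => y k.
pose z k := b k - lam%:C *: a k.
have hz : \sum_k complex.Re (form M (z k) (z k)) = Q - lam * S + lam ^+ 2 * P.
  rewrite /Q /S /P !cRe_sum mulr_sumr mulr_sumr -sumrB -big_split /=; apply: eq_bigr => l _.
  rewrite /z !(formBl, formBr, formZl, formZr) adj_real.
  case: (form M (a l) (a l)) => ? ?; case: (form M (a l) (b l)) => ? ?.
  case: (form M (b l) (a l)) => ? ?; case: (form M (b l) (b l)) => ? ? /=.
  ring.
have hz0 : Q - lam * S + lam ^+ 2 * P = 0.
  rewrite /lam; apply: (@mulIf _ (4 * P)); first by rewrite mulf_neq0 // gt_eqF.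
  rewrite mul0r; have hP : P != 0 by rewrite gt_eqF.
  have -> : (Q - S / (2 * P) * S + (S / (2 * P)) ^+ 2 * P) * (4 * P) = 4 * P * Q - S ^+ 2.
    by field.
  by rewrite hSQ subrr.
have := sum_ge0_eq0 (fun k => ge0 (z k)) (etrans hz hz0) k.
move/(form_vanish Mp)/(_ y); rewrite /z formBr formZr => /eqP; rewrite subr_eq0 => /eqP.
done.
Qed.

Lemma eq_case n D N (M : 'I_N -> 'M[C]_n) (a b : 'I_D -> 'cV[C]_n) : POVM M ->
  (forall m,
    let P := complex.Re (\sum_k form (M m) (a k) (a k)) in
    let S := complex.Re (\sum_k (form (M m) (a k) (b k) + form (M m) (b k) (a k))) in
    let Q := complex.Re (\sum_k form (M m) (b k) (b k)) in
    S ^+ 2 = 4 * P * Q /\ (P = 0 -> Q = 0)) ->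
  forall j k, form 1%:M (a j) (b k) = form 1%:M (b j) (a k).
Proof.
move=> [hpsd hsum] hc.
have hl m : exists lam : R, forall y k, form (M m) y (b k) = lam%:C * form (M m) y (a k).
  by case: (hc m) => h1 h2; apply: step1.
have [lam hlam] := boolp.choice hl.
move=> j k.
rewrite -hsum !form_sumM; apply: eq_bigr => m _.
rewrite hlam (psd_herm (b j) (a k) (hpsd m)) hlam conjcM adj_real.
by rewrite -(psd_herm (a j) (a k) (hpsd m)).
Qed.

End H7.
Local Open Scope classical_set_scope.
Set Implicit Arguments. Unset Strict Implicit. Unset Printing Implicit Defensive.

Section H8.
Variable R : realType.
Local Notation C := R[i].

Variables (Theta : set R) (D : nat) (psi0 : 'cV[C]_D) (Ups Ups' : 'I_D -> R -> 'M[C]_D)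
  (p : 'I_D -> R -> R) (w w' : 'I_D -> R -> 'cV[C]_D).
Hypothesis hopen : open Theta.
Hypothesis hU : forall k th, Theta th -> mxderiv (Ups k) th (Ups' k th).
Hypothesis hw : forall k th, Theta th -> mxderiv (w k) th (w' k th).
Hypothesis hcanon : forall j k th, Theta th ->
     \tr (Ups k th *m (psi0 *m adj psi0) *m adj (Ups j th))
       = (if j == k then (p k th)%:C else 0).
Hypothesis hUw : forall k th, Theta th -> Ups k th *m psi0 = (Num.sqrt (p k th))%:C *: w k th.
Hypothesis hortho : forall j k th, Theta th ->
     (adj (w j th) *m w k th) 0 0 = (if j == k then 1 else 0).
Hypothesis hdich : forall k, (forall th, Theta th -> p k th = 0) \/ (forall th, Theta th -> 0 < p k th).
Variable th : R.
Hypothesis hth : Theta th.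

Lemma nearT : \forall t \near th, Theta t.
Proof. by apply: open_nbhs_nbhs; split. Qed.

Let b k := Ups' k th *m psi0.

Lemma ha k : mxderiv (fun t => Ups k t *m psi0) th (b k).
Proof. by apply: mxderiv_mulmr; apply: hU. Qed.

Lemma unsupp k : p k th = 0 -> b k = 0 /\ forall t, Theta t -> p k t = 0.
Proof.
move=> h0.
have hz : forall t, Theta t -> p k t = 0.
  case: (hdich k) => // hpos; by move: (hpos th hth); rewrite h0 ltxx.
split => //.
apply: (mxderiv_uniq (ha k)).
apply: mxderiv_near (mxderiv_cst 0 th).
near=> t; rewrite hUw; last by near: t; exact: nearT.
rewrite hz ?sqrtr0 ?scale0r //; by near: t; exact: nearT.
Unshelve. all: by end_near.
Qed.

Lemma supp k : 0 < p k th -> exists c : R, b k = c%:C *: w k th + (Num.sqrt (p k th))%:C *: w' k th.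
Proof.
move=> hp.
pose g t := complex.Re (\tr (Ups k t *m (psi0 *m adj psi0) *m adj (Ups k t))).
have hg : mxderiv (fun t => Ups k t *m (psi0 *m adj psi0) *m adj (Ups k t)) th _
  := mxderiv_mul (mxderiv_mulmr (psi0 *m adj psi0) (hU k hth)) (mxderiv_adj (hU k hth)).
have [hg1 _] := cderiv_tr hg.
move: hg1; set d := complex.Re (\tr (_ + _)) => hg1.
have hpd : is_derive th (1:R) (p k) d.
  eapply near_eq_is_derive; last exact hg1.
  near=> t; rewrite hcanon ?eqxx //; near: t; exact: nearT.
have hs := is_derive1_comp (is_derive1_sqrt hp) hpd.
have hc := cderiv_real hs.
have := mxderiv_scale hc (hw k hth).
move=> /(mxderiv_near (g := fun t => Ups k t *m psi0)) h.
eexists; apply: (mxderiv_uniq (ha k)); apply: h.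
near=> t; rewrite hUw //; near: t; exact: nearT.
Unshelve. all: by end_near.
Qed.

Lemma ortho_deriv j k : form 1%:M (w' j th) (w k th) + form 1%:M (w j th) (w' k th) = 0.
Proof.
have h := mxderiv_mul (mxderiv_adj (hw j hth)) (hw k hth).
have h1 := h 0 0.
have h2 : cderiv (fun t => (adj (w j t) *m w k t) 0 0) th 0.
  apply: cderiv_near (cderiv_cst (if j == k then 1 else 0) th).
  near=> t; rewrite hortho //; near: t; exact: nearT.
have := cderiv_uniq h1 h2.
by rewrite /form !mulmx1 mxE => <-; rewrite !mxE.
Unshelve. all: by end_near.
Qed.

End H8.
Local Open Scope classical_set_scope.
Set Implicit Arguments. Unset Strict Implicit. Unset Printing Implicit Defensive.

Section H9.
Variable R : realType.
Local Notation C := R[i].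

Lemma adj_tstar m n (A : 'M[C]_(m, n)) : adj A = map_mx (@Num.conj_op _) (A^T).
Proof. by apply/matrixP => i j; rewrite !mxE conjCE. Qed.

Lemma form_rank1 n (N : 'rV[C]_n) x y : form (adj N *m N) x y = conjc ((N *m x) 0 0) * (N *m y) 0 0.
Proof.
rewrite /form !mulmxA -[adj x *m adj N]adjM -mulmxA mxE big_ord1.
by rewrite !mxE.
Qed.

Lemma spectral_povm n (L : 'M[C]_n) : adj L = L -> exists (M : 'I_n -> 'M[C]_n) (d : 'I_n -> R),
  POVM M /\ (forall m x y, form (M m) x (L *m y) = (d m)%:C * form (M m) x y)
         /\ (forall m x y, form (M m) (L *m x) y = (d m)%:C * form (M m) x y).
Proof.
move=> hLa.
have herm : L \is hermsymmx.
  by apply/is_hermitianmxP; rewrite expr0 scale1r -adj_tstar hLa.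
set P := spectralmx L; set sp := spectral_diag L.
have hPu : P \in unitmx := spectral_unit L.
have hL : L = invmx P *m diag_mx sp *m P.
  by apply/orthomx_spectralP; apply: hermitian_normalmx.
have hreal := hermitian_spectral_diag_real herm.
pose d m := complex.Re (sp 0 m).
have hd m : sp 0 m = (d m)%:C.
  by rewrite /d RRe_real //; move/mxOverP: hreal; apply.
pose N m := row m P.
have hN m : N m *m L = (d m)%:C *: N m.
  rewrite /N -row_mul hL !mulmxA mulmxV // mul1mx row_mul row_diag_mx -scalemxAl -rowE hd //.
exists (fun m => adj (N m) *m N m), d; split; last split.
- split.
    move=> m v; rewrite /psd -/(form _ v v) form_rank1 mulrC.
    exact: mulcJ_ge0.
  have -> : \sum_m adj (N m) *m N m = adj P *m P.
    apply/matrixP => i j; rewrite summxE !mxE; apply: eq_bigr => m _.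
    by rewrite !mxE big_ord1 !mxE.
  rewrite adj_tstar -invmx_unitary ?mulVmx //; exact: spectral_unitarymx.
- move=> m x y; rewrite !form_rank1 mulmxA hN -scalemxAl; set u := conjc _.
  by rewrite mxE mulrCA.
- move=> m x y; rewrite !form_rank1 mulmxA hN -scalemxAl; set u := (_ *m y) 0 0.
  by rewrite mxE conjcM conjc_real mulrA.
Qed.

End H9.
Local Open Scope classical_set_scope.
Set Implicit Arguments. Unset Strict Implicit. Unset Printing Implicit Defensive.

Section H10.
Variable R : realType.
Local Notation C := R[i].

Lemma outer_mul n (x y v : 'cV[C]_n) : (x *m adj y) *m v = form 1%:M y v *: x.
Proof. by rewrite -mulmxA [adj y *m v]mx11_scalar mul_mx_scalar /form mulmx1. Qed.

Lemma construct D (a b w w' : 'I_D -> 'cV[C]_D) (s c : 'I_D -> R) (S : 'I_D -> bool) :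
  (forall k, a k = (s k)%:C *: w k) ->
  (forall k, S k -> 0 < s k) ->
  (forall k, ~~ S k -> s k = 0 /\ b k = 0) ->
  (forall k, S k -> b k = (c k)%:C *: w k + (s k)%:C *: w' k) ->
  (forall j k, form 1%:M (w j) (w k) = if j == k then 1 else 0) ->
  (forall j k, S j -> S k -> form 1%:M (w' j) (w k) = 0) ->
  exists L, adj L = L /\ forall j, L *m a j = b j.
Proof.
move=> ha hs hns hb hw hc.
pose L := \sum_k (if S k then ((c k / s k)%:C *: (w k *m adj (w k)) + w' k *m adj (w k) + w k *m adj (w' k)) else 0).
exists L; split.
  rewrite /L adj_sum; apply: eq_bigr => k _; case: ifP => _; last exact: adj0.
  by rewrite !adjD !adjZ !adjM !adjK adj_real addrAC.
move=> j; case hSj : (S j); last first.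
  have [s0 b0] := hns j (negbT hSj).
  by rewrite ha s0 b0 scale0r mulmx0.
rewrite /L mulmx_suml (bigD1 j) //= big1 ?addr0.
  rewrite hSj !mulmxDl -!scalemxAl !outer_mul ha !formZr hw eqxx (hc j j hSj hSj) hb //.
  rewrite !mulr0 scale0r addr0 !mulr1 scalerA -rmorphM /= divfK ?gt_eqF ?hs //.
move=> k hk; case hSk : (S k); last by rewrite mul0mx.
rewrite !mulmxDl -!scalemxAl !outer_mul ha !formZr hw (hc k j hSk hSj).
by rewrite (negPf hk) !mulr0 !scale0r scaler0 !addr0.
Qed.

Lemma achieve n D N (M : 'I_N -> 'M[C]_n) (d : 'I_N -> R) (L : 'M[C]_n) (a b : 'I_D -> 'cV[C]_n) :
  (forall k, b k = L *m a k) ->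
  (forall m x y, form (M m) x (L *m y) = (d m)%:C * form (M m) x y) ->
  (forall m x y, form (M m) (L *m x) y = (d m)%:C * form (M m) x y) ->
  forall m,
    let P := complex.Re (\sum_k form (M m) (a k) (a k)) in
    let S := complex.Re (\sum_k (form (M m) (a k) (b k) + form (M m) (b k) (a k))) in
    let Q := complex.Re (\sum_k form (M m) (b k) (b k)) in
    S ^+ 2 = 4 * P * Q /\ (P = 0 -> Q = 0).
Proof.
move=> hb h1 h2 m P S Q.
have eS : S = 2 * d m * P.
  rewrite /S /P; under eq_bigr => k _ do rewrite hb h1 h2.
  rewrite big_split -!mulr_sumr /=; case: (\sum_k form (M m) (a k) (a k)) => ? ? /=; ring.
have eQ : Q = d m ^+ 2 * P.
  rewrite /Q /P; under eq_bigr => k _ do rewrite hb h1 h2 mulrA.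
  rewrite -!mulr_sumr /=; case: (\sum_k form (M m) (a k) (a k)) => ? ? /=; ring.
by rewrite eS eQ; split; [ring | move=> ->; rewrite mulr0].
Qed.

End H10.
Unset Implicit Arguments. Set Strict Implicit. Set Printing Implicit Defensive.

Local Open Scope classical_set_scope.

Lemma finish_alg (R : realType) (s t : R) (X Y : R[i]) : 0 < s -> 0 < t ->
  (s * t)%:C * X = (s * t)%:C * Y -> Y + X = 0 -> Y = 0.
Proof.
move=> hs ht; case: X => x1 x2; case: Y => y1 y2 /= [e1 e2] [f1 f2].
have hst : s * t != 0 by rewrite mulf_neq0 // gt_eqF.
have hx1 : x1 = - y1 by lra.
have hx2 : x2 = - y2 by lra.
move: e1 e2; rewrite hx1 hx2 !mul0r !subr0 !addr0 !mulrN => e1 e2.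
have : (s * t) * (y1 + y1) = 0 by rewrite mulrDr -[X in X + _]e1 addNr.
have : (s * t) * (y2 + y2) = 0 by rewrite mulrDr -[X in X + _]e2 addNr.
move=> /eqP; rewrite mulf_eq0 (negPf hst) /= => /eqP h2.
move=> /eqP; rewrite mulf_eq0 (negPf hst) /= => /eqP h1.
by apply: complex_ext => /=; lra.
Qed.

Theorem theorem2p6 (R : realType) (Theta : set R)
  (D : nat) (psi0 : 'cV[R[i]]_D)
  (Ups Ups' : 'I_D -> R -> 'M[R[i]]_D)
  (p : 'I_D -> R -> R)
  (w w' : 'I_D -> R -> 'cV[R[i]]_D) :
  open Theta -> is_interval Theta -> Theta !=set0 ->
  (0 < D)%N ->
  (* psi0 is a unit vector; rho0 = |psi0><psi0| *)
  (adj psi0 *m psi0) 0 0 = 1 ->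
  (* differentiability of the Kraus operators and of the basis vectors *)
  (forall k th, Theta th -> mxderiv (Ups k) th (Ups' k th)) ->
  (forall k th, Theta th -> mxderiv (w k) th (w' k th)) ->
  (* completeness of the Kraus operators *)
  (forall th, Theta th -> \sum_(k < D) adj (Ups k th) *m Ups k th = 1%:M) ->
  (* canonical Kraus operators *)
  (forall j k th, Theta th ->
     \tr (Ups k th *m (psi0 *m adj psi0) *m adj (Ups j th))
       = (if j == k then (p k th)%:C else 0)) ->
  (forall k th, Theta th -> Ups k th *m psi0 = (Num.sqrt (p k th))%:C *: w k th) ->
  (* {w_k(theta)} orthonormal basis *)
  (forall j k th, Theta th ->
     (adj (w j th) *m w k th) 0 0 = (if j == k then 1 else 0)) ->
  (* each p_k is identically zero or strictly positive on Theta *)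
  (forall k, (forall th, Theta th -> p k th = 0) \/ (forall th, Theta th -> 0 < p k th)) ->
  forall th, Theta th ->
    (forall (N : nat) (M : 'I_N -> 'M[R[i]]_D), POVM M ->
        fisher (outstate Ups (psi0 *m adj psi0)) M th
          <= CUps Ups' (psi0 *m adj psi0) th)
    /\
    ((exists (N : nat) (M : 'I_N -> 'M[R[i]]_D), POVM M /\
        fisher (outstate Ups (psi0 *m adj psi0)) M th
          = CUps Ups' (psi0 *m adj psi0) th)
     <->
     (forall j k, 0 < p j th -> 0 < p k th ->
        (adj (w' j th) *m w k th) 0 0 = 0)).
Proof.
move=> hopen hint hne hD hpsi hU hw hsum hcanon hUw hortho hdich th hth.
have hU' : forall k, mxderiv (Ups k) th (Ups' k th) := fun k => hU k th hth.
split.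
  by move=> N M hM; exact: (proj1 (fisher_char psi0 hU' hM)).
have hw1 j k : form 1%:M (w j th) (w k th) = if j == k then 1 else 0.
  by rewrite /form mulmx1 hortho.
split.
- move=> [N [M [hM heq]]] j k hj hk.
  have hc := proj1 (proj2 (fisher_char psi0 hU' hM)) heq.
  have he := @eq_case _ _ _ _ M (fun k => Ups k th *m psi0) (fun k => Ups' k th *m psi0) hM.
  have {}he : form 1%:M (Ups j th *m psi0) (Ups' k th *m psi0) = form 1%:M (Ups' j th *m psi0) (Ups k th *m psi0).
    by apply: he => m /=; have := hc m; rewrite /pM /QM (sME psi0 hU') outprobE.
  have ho := ortho_deriv hopen hw hortho hth j k.
  have -> : (adj (w' j th) *m w k th) 0 0 = form 1%:M (w' j th) (w k th) by rewrite /form mulmx1.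
  have sj : 0 < Num.sqrt (p j th) by rewrite sqrtr_gt0.
  have sk : 0 < Num.sqrt (p k th) by rewrite sqrtr_gt0.
  apply: (@finish_alg _ _ _ _ _ sj sk _ ho).
  case: (eqVneq j k) => [ejk|njk].
    subst k; have [c ec] := supp hopen hU hw hcanon hUw hth hj.
    move: he; rewrite ec !hUw // !(formDl, formDr, formZl, formZr) !adj_real !hw1 eqxx.
    by move/addrI; rewrite rmorphM -!mulrA.
  have [cj ej] := supp hopen hU hw hcanon hUw hth hj.
  have [ck ek] := supp hopen hU hw hcanon hUw hth hk.
  move: he; rewrite ej ek !hUw // !(formDl, formDr, formZl, formZr) !adj_real !hw1 (negPf njk).
  by rewrite !mulr0 !add0r rmorphM -!mulrA.
- move=> hcond.
  have hc0 k : exists c : R, 0 < p k th ->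
      Ups' k th *m psi0 = c%:C *: w k th + (Num.sqrt (p k th))%:C *: w' k th.
    case: (ltrP 0 (p k th)) => hk.
      by have [c e] := supp hopen hU hw hcanon hUw hth hk; exists c.
    by exists 0.
  have [c hc] := boolp.choice hc0.
  have hns k : ~~ (0 < p k th) -> Num.sqrt (p k th) = 0 /\ Ups' k th *m psi0 = 0.
    move=> hk; have pk0 : p k th = 0.
      case: (hdich k) => h; first exact: h.
      by move: (h th hth); rewrite (negPf hk).
    by rewrite pk0 sqrtr0; split => //; case: (unsupp hopen hU hUw hdich hth pk0).
  have hsq k : 0 < p k th -> 0 < Num.sqrt (p k th) by rewrite sqrtr_gt0.
  have hc1 j k : 0 < p j th -> 0 < p k th -> form 1%:M (w' j th) (w k th) = 0.
    by move=> hj hk; rewrite /form mulmx1; exact: hcond.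
  have [L [hLa hLb]] := @construct _ D (fun k => Ups k th *m psi0) (fun k => Ups' k th *m psi0)
     (fun k => w k th) (fun k => w' k th) (fun k => Num.sqrt (p k th)) c (fun k => 0 < p k th)
     (fun k => hUw k th hth) hsq hns hc hw1
     hc1.
  have [M [d [hM [h1 h2]]]] := spectral_povm hLa.
  exists D, M; split => //.
  apply/(proj2 (proj2 (fisher_char psi0 hU' hM))) => m.
  have := @achieve _ _ _ _ M d L (fun k => Ups k th *m psi0) (fun k => Ups' k th *m psi0)
    (fun k => esym (hLb k)) h1 h2 m.
  by rewrite /pM /QM (sME psi0 hU') outprobE.
Qed.
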